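(* For the SVIQS system, if $R_0>1$ then the disease is uniformly persistent: there exists a constant $\varepsilon>0$ such that every solution whose initial data satisfy $S_k(0),V_k(0),I_k(0),Q_k(0)\ge0$, $S_k(0)+V_k(0)+I_k(0)+Q_k(0)=N_k^*$ for all $k$, and $I(0)=\sum_{k=1}^np(k)I_k(0)>0$, satisfies $\liminf_{t\to\infty}I(t)\ge\varepsilon$, where $I(t)=\sum_{k=1}^np(k)I_k(t)$.
   Context: Fix an integer $n\ge1$ and numbers $p(1),\dots,p(n)>0$ with $\sum_{k=1}^n p(k)=1$; set $\langle k\rangle=\sum_{k=1}^n kp(k)$. Fix constants $b>d>0$ and let $\Phi^*>0$ satisfy $\Phi^*=\frac{1}{\langle k\rangle}\sum_{i=1}^n \frac{i\,p(i)\,b\Phi^*}{d+bi\Phi^*}$. For $k=1,\dots,n$ put $N_k^*=\frac{bk\Phi^*}{d+bk\Phi^*}\in(0,1)$ and $\Lambda_k=bk(1-N_k^* )\Phi^*$ (so $\Lambda_k=dN_k^*>0$). Parameters: $\lambda(k)>0$, $\varphi(k)>0$, $\mu_k>0$ for $k=1,\dots,n$; constants $\beta,\gamma,\eta,\omega>0$ and $\delta\in[0,1]$. For functions $I_1(t),\dots,I_n(t)$ set $\Theta(t)=\frac{1}{\langle k\rangle}\sum_{i=1}^n\varphi(i)p(i)I_i(t)$. The SVIQS system is, for $k=1,\dots,n$: $S_k'=\Lambda_k-\lambda(k)S_k\Theta+\gamma I_k+\eta Q_k+\omega V_k-(\mu_k+d)S_k$, $V_k'=\mu_kS_k-\delta\lambda(k)V_k\Theta-(d+\omega)V_k$,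 $I_k'=\lambda(k)S_k\Theta+\delta\lambda(k)V_k\Theta-(\gamma+\beta+d)I_k$, $Q_k'=\beta I_k-(\eta+d)Q_k$. Its basic reproduction number is $R_0=\frac{1}{\langle k\rangle}\sum_{i=1}^n\frac{\lambda(i)\varphi(i)p(i)\Lambda_i(\omega+d+\delta\mu_i)}{d(\gamma+\beta+d)(\omega+\mu_i+d)}$. *)

(* Defs.v *)
From Stdlib Require Import Reals.
Open Scope R_scope.

Fixpoint sumk (n : nat) (f : nat -> R) : R :=
  match n with
  | O => 0
  | S m => sumk m f + f (S m)
  end.

Definition avgk (n : nat) (p : nat -> R) : R := sumk n (fun k => INR k * p k).

Definition Nstar (b d Phis : R) (k : nat) : R :=
  b * INR k * Phis / (d + b * INR k * Phis).

Definition Lam (b d Phis : R) (k : nat) : R :=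
  b * INR k * (1 - Nstar b d Phis k) * Phis.

Definition Theta (n : nat) (p phi : nat -> R) (I : nat -> R -> R) (t : R) : R :=
  / avgk n p * sumk n (fun i => phi i * p i * I i t).

Definition R0_SVIQS (n : nat) (p lam phi mu : nat -> R) (b d Phis beta gamma omega delta : R) : R :=
  / avgk n p *
  sumk n (fun i => lam i * phi i * p i * Lam b d Phis i * (omega + d + delta * mu i)
                   / (d * (gamma + beta + d) * (omega + mu i + d))).

Definition right_cont0 (f : R -> R) : Prop :=
  forall e, 0 < e -> exists dl, 0 < dl /\
    forall t, 0 <= t < dl -> Rabs (f t - f 0) < e.

Definition is_SVIQS_solution (n : nat) (p lam phi mu : nat -> R)
  (b d Phis beta gamma eta omega delta : R) (S V I Q : nat -> R -> R) : Prop :=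
  forall k, (1 <= k <= n)%nat ->
    right_cont0 (S k) /\ right_cont0 (V k) /\ right_cont0 (I k) /\ right_cont0 (Q k) /\
    forall t, 0 < t ->
      derivable_pt_lim (S k) t
        (Lam b d Phis k - lam k * S k t * Theta n p phi I t + gamma * I k t
         + eta * Q k t + omega * V k t - (mu k + d) * S k t) /\
      derivable_pt_lim (V k) t
        (mu k * S k t - delta * lam k * V k t * Theta n p phi I t - (d + omega) * V k t) /\
      derivable_pt_lim (I k) t
        (lam k * S k t * Theta n p phi I t + delta * lam k * V k t * Theta n p phi I t
         - (gamma + beta + d) * I k t) /\
      derivable_pt_lim (Q k) t (beta * I k t - (eta + d) * Q k t).

Definition Itot (n : nat) (p : nat -> R) (I : nat -> R -> R) (t : R) : R :=
  sumk n (fun k => p k * I k t).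

(* Main.v *)
Require Import Defs.
From Stdlib Require Import Reals Lra Lia Psatz Classical ZArith.
Open Scope R_scope.

Lemma sumk_ext n f g : (forall k, (1 <= k <= n)%nat -> f k = g k) -> sumk n f = sumk n g.
Proof. induction n; simpl; intros H; auto.
  rewrite IHn. rewrite H. reflexivity. lia. intros; apply H; lia. Qed.

Lemma sumk_plus n f g : sumk n (fun k => f k + g k) = sumk n f + sumk n g.
Proof. induction n; simpl; [lra|rewrite IHn; lra]. Qed.

Lemma sumk_scal n a f : sumk n (fun k => a * f k) = a * sumk n f.
Proof. induction n; simpl; [lra|rewrite IHn; lra]. Qed.

Lemma sumk_le n f g : (forall k, (1 <= k <= n)%nat -> f k <= g k) -> sumk n f <= sumk n g.
Proof. induction n; simpl; intros H; [lra|].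
  assert (sumk n f <= sumk n g) by (apply IHn; intros; apply H; lia).
  assert (f (S n) <= g (S n)) by (apply H; lia). lra. Qed.

Lemma sumk_nonneg n f : (forall k, (1 <= k <= n)%nat -> 0 <= f k) -> 0 <= sumk n f.
Proof. intros H. replace 0 with (sumk n (fun _ => 0)).
  apply sumk_le; auto. induction n; simpl; auto. rewrite IHn; [lra|intros; apply H; lia]. Qed.

Lemma sumk_pos n f : (1 <= n)%nat -> (forall k, (1 <= k <= n)%nat -> 0 < f k) -> 0 < sumk n f.
Proof. destruct n; [lia|]. intros _ H; simpl.
  assert (0 <= sumk n f) by (apply sumk_nonneg; intros; apply Rlt_le, H; lia).
  assert (0 < f (S n)) by (apply H; lia). lra. Qed.

Lemma sumk_term_le n f j : (forall k, (1 <= k <= n)%nat -> 0 <= f k) -> (1 <= j <= n)%nat ->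
  f j <= sumk n f.
Proof. induction n; intros H Hj; [lia|]. simpl.
  destruct (Nat.eq_dec j (S n)). subst.
  assert (0 <= sumk n f) by (apply sumk_nonneg; intros; apply H; lia). lra.
  assert (f j <= sumk n f) by (apply IHn; [intros; apply H; lia| lia]).
  assert (0 <= f (S n)) by (apply H; lia). lra. Qed.

Lemma sumk_deriv n (f f' : nat -> R -> R) t :
  (forall k, (1 <= k <= n)%nat -> derivable_pt_lim (f k) t (f' k t)) ->
  derivable_pt_lim (fun s => sumk n (fun k => f k s)) t (sumk n (fun k => f' k t)).
Proof. induction n; intros H; simpl.
  - apply derivable_pt_lim_const.
  - apply (derivable_pt_lim_plus (fun s => sumk n (fun k => f k s)) (f (S n))).
    apply IHn; intros; apply H; lia. apply H; lia. Qed.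

Lemma dexp r s : derivable_pt_lim (fun u => exp (r * u)) s (r * exp (r * s)).
Proof.
  replace (r * exp (r*s)) with (exp (r*s) * r) by ring.
  apply (derivable_pt_lim_comp (fun u => r * u) exp s r (exp (r*s))).
  change (fun u => r*u) with (mult_real_fct r id).
  pattern r at 2; replace r with (r * 1) by ring.
  apply (derivable_pt_lim_scal id r s 1). apply derivable_pt_lim_id.
  apply derivable_pt_lim_exp. Qed.

Lemma nonincr h dh a b : a <= b ->
  (forall c, a <= c <= b -> derivable_pt_lim h c (dh c)) ->
  (forall c, a <= c <= b -> dh c <= 0) -> h b <= h a.
Proof. intros Hab Hd Hn. destruct (Req_dec a b). subst; lra.
  destruct (MVT_cor2 h dh a b) as [c [E Hc]]; [lra|auto|].
  assert (dh c <= 0) by (apply Hn; lra). nra. Qed.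

Lemma cmp_up x dx a t A r : a <= t -> r <> 0 ->
  (forall c, a <= c <= t -> derivable_pt_lim x c (dx c)) ->
  (forall c, a <= c <= t -> dx c <= A - r * x c) ->
  x t <= A / r + (x a - A / r) * exp (- r * (t - a)).
Proof. intros Hat Hr Hd Hb.
  set (h := fun s => (x s - A / r) * exp (r * s)).
  assert (h t <= h a).
  { apply (nonincr h (fun s => dx s * exp (r*s) + (x s - A/r) * (r * exp (r*s)))); auto.
    - intros c Hc. unfold h. apply (derivable_pt_lim_mult (fun s => x s - A / r) (fun s => exp (r*s))).
      replace (dx c) with (dx c - 0) by ring. apply derivable_pt_lim_minus. auto.
      apply derivable_pt_lim_const. apply dexp.
    - intros c Hc. specialize (Hb c Hc). pose proof (exp_pos (r*c)).
      replace (dx c * exp (r * c) + (x c - A / r) * (r * exp (r * c))) with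
        ((dx c - (A - r * x c)) * exp (r*c)) by (field; auto). nra. }
  unfold h in H.
  assert (E: exp (- r * (t - a)) = exp (r * a) * / exp (r * t)).
  { rewrite <- exp_Ropp, <- exp_plus. f_equal. ring. }
  rewrite E. pose proof (exp_pos (r*t)). pose proof (exp_pos (r*a)).
  apply (Rmult_le_reg_r (exp (r*t))); auto.
  replace ((A / r + (x a - A / r) * (exp (r * a) * / exp (r * t))) * exp (r * t)) with
    (A / r * exp (r*t) + (x a - A / r) * exp (r * a)) by (field; lra). nra. Qed.

Lemma cmp_low x dx a t g : a <= t ->
  (forall c, a <= c <= t -> derivable_pt_lim x c (dx c)) ->
  (forall c, a <= c <= t -> dx c >= g * x c) ->
  x t >= x a * exp (g * (t - a)).
Proof. intros Hat Hd Hb.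
  set (h := fun s => - (x s * exp (- g * s))).
  assert (h t <= h a).
  { apply (nonincr h (fun s => - (dx s * exp (-g*s) + x s * (-g * exp (-g*s))))); auto.
    - intros c Hc. unfold h. apply derivable_pt_lim_opp.
      apply (derivable_pt_lim_mult x (fun s => exp (-g*s))). auto. apply dexp.
    - intros c Hc. specialize (Hb c Hc). pose proof (exp_pos (-g*c)). nra. }
  unfold h in H.
  assert (E: exp (g * (t - a)) = exp (- g * a) * / exp (- g * t)).
  { rewrite <- exp_Ropp, <- exp_plus. f_equal. ring. }
  rewrite E. pose proof (exp_pos (-g*t)). pose proof (exp_pos (-g*a)).
  apply Rle_ge. apply (Rmult_le_reg_r (exp (-g*t))); auto.
  replace (x a * (exp (- g * a) * / exp (- g * t)) * exp (- g * t)) with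
    (x a * exp (- g * a)) by (field; lra). nra. Qed.

Definition ccont (g : R -> R) a b := forall c, a <= c <= b -> forall e, 0 < e ->
  exists dl, 0 < dl /\ forall u, a <= u <= b -> Rabs (u - c) < dl -> Rabs (g u - g c) < e.

Lemma last_time g a b eta : a < b -> ccont g a b -> g a >= eta -> g b < eta ->
  exists s, a <= s < b /\ g s = eta /\ forall u, s < u <= b -> g u < eta.
Proof. intros Hab Hc Ha Hb.
  set (E := fun u => a <= u <= b /\ g u >= eta).
  destruct (completeness E) as [s [Hub Hlub]].
  { exists b. intros u [Hu _]. lra. }
  { exists a. split; [lra|auto]. }
  assert (Has : a <= s) by (apply Hub; split; [lra|auto]).
  assert (Hsb : s <= b) by (apply Hlub; intros u [Hu _]; lra).
  assert (C1 : forall u, s < u <= b -> g u < eta).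
  { intros u Hu. destruct (Rlt_or_le (g u) eta); auto.
    assert (u <= s) by (apply Hub; split; [lra|lra]). lra. }
  assert (C2 : g s >= eta).
  { destruct (Rge_or_lt (g s) eta) as [|Hlt]; auto.
    destruct (Hc s (conj Has Hsb) (eta - g s)) as [dl [Hdl Hd]]; [lra|].
    destruct (classic (exists u, E u /\ u > s - dl)) as [[u [[Hu1 Hu2] Hu3]]|Hno].
    - assert (u <= s) by (apply Hub; split; auto).
      assert (Rabs (g u - g s) < eta - g s) by (apply Hd; auto; rewrite Rabs_left1; lra).
      apply Rabs_def2 in H0. lra.
    - assert (s <= s - dl). { apply Hlub. intros u Hu. destruct (Rle_or_lt u (s - dl)); auto.
        exfalso; apply Hno; exists u; split; auto; lra. } lra. }
  assert (C3 : s < b). { destruct (Req_dec s b); [subst; lra|lra]. }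
  exists s; split; [lra|split; auto].
  destruct (Rle_or_lt (g s) eta) as [Hle|Hgt]; [lra|].
  destruct (Hc s (conj Has Hsb) (g s - eta)) as [dl [Hdl Hd]]; [lra|].
  set (u := s + Rmin (dl/2) ((b - s)/2)).
  assert (Hm1 : Rmin (dl/2) ((b-s)/2) <= dl/2) by apply Rmin_l.
  assert (Hm2 : Rmin (dl/2) ((b-s)/2) <= (b-s)/2) by apply Rmin_r.
  assert (Hm3 : 0 < Rmin (dl/2) ((b-s)/2)) by (apply Rmin_glb_lt; lra).
  assert (g u < eta) by (apply C1; unfold u; lra).
  assert (Rabs (g u - g s) < g s - eta) by (apply Hd; unfold u; [lra| rewrite Rabs_right; lra]).
  apply Rabs_def2 in H0. lra. Qed.

Lemma first_time G a b : a < b -> ccont G a b -> G a > 0 -> G b <= 0 ->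
  exists tau, a < tau <= b /\ G tau = 0 /\ forall s, a <= s < tau -> G s > 0.
Proof. intros Hab Hc Ha Hb.
  set (h := fun u => - G (- u)).
  destruct (last_time h (-b) (-a) 0) as [s [Hs1 [Hs2 Hs3]]]; [lra| | unfold h; rewrite Ropp_involutive; lra | unfold h; rewrite Ropp_involutive; lra|].
  - intros c Hcc e He. destruct (Hc (-c) ltac:(lra) e He) as [dl [Hdl Hd]].
    exists dl; split; auto. intros u Hu Hu2. unfold h.
    replace (- G (- u) - - G (- c)) with (- (G (-u) - G (-c))) by ring. rewrite Rabs_Ropp.
    apply Hd. lra. replace (-u - - c) with (- (u - c)) by ring. rewrite Rabs_Ropp; auto.
  - exists (-s). unfold h in *. split; [lra|]. split; [lra|].
    intros s' Hs'. assert (- G (- - s') < 0) by (apply Hs3; lra).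
    rewrite Ropp_involutive in H. lra. Qed.

Lemma cpt_eps f c : continuity_pt f c -> forall e, 0 < e ->
  exists dl, 0 < dl /\ forall u, Rabs (u - c) < dl -> Rabs (f u - f c) < e.
Proof. intros H e He. destruct (H e He) as [dl [Hdl Hd]]. exists dl; split; auto.
  intros u Hu. destruct (Req_dec u c). subst. unfold Rminus; rewrite Rplus_opp_r, Rabs_R0; auto.
  apply (Hd u). split. split; [exact I| auto]. exact Hu. Qed.

Lemma ccont_sol f a b : 0 <= a ->
  (forall c, a <= c <= b -> 0 < c -> exists l, derivable_pt_lim f c l) ->
  (a = 0 -> right_cont0 f) -> ccont f a b.
Proof. intros Ha Hd Hr c Hc e He.
  destruct (Req_dec c 0).
  - subst. assert (a = 0) by lra. destruct (Hr H e He) as [dl [Hdl Hd']].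
    exists dl; split; auto. intros u Hu Hu2. apply Hd'. rewrite Rminus_0_r in Hu2.
    rewrite Rabs_right in Hu2; lra.
  - destruct (Hd c Hc ltac:(lra)) as [l Hl].
    destruct (cpt_eps f c (derivable_continuous_pt f c (exist _ l Hl)) e He) as [dl [Hdl Hd']].
    exists dl; split; auto. Qed.

Lemma ccont_plus f g a b : ccont f a b -> ccont g a b -> ccont (fun t => f t + g t) a b.
Proof. intros Hf Hg c Hc e He.
  destruct (Hf c Hc (e/2)) as [d1 [H1 H1']]; [lra|].
  destruct (Hg c Hc (e/2)) as [d2 [H2 H2']]; [lra|].
  exists (Rmin d1 d2); split. apply Rmin_glb_lt; auto.
  intros u Hu Hu2. pose proof (Rmin_l d1 d2). pose proof (Rmin_r d1 d2).
  specialize (H1' u Hu ltac:(lra)). specialize (H2' u Hu ltac:(lra)).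
  replace (f u + g u - (f c + g c)) with ((f u - f c) + (g u - g c)) by ring.
  pose proof (Rabs_triang (f u - f c) (g u - g c)). lra. Qed.

Lemma ccont_scal f k a b : ccont f a b -> ccont (fun t => k * f t) a b.
Proof. intros Hf c Hc e He.
  destruct (Hf c Hc (e / (Rabs k + 1))) as [d1 [H1 H1']].
  { apply Rdiv_lt_0_compat; auto. pose proof (Rabs_pos k); lra. }
  exists d1; split; auto. intros u Hu Hu2. specialize (H1' u Hu Hu2).
  replace (k * f u - k * f c) with (k * (f u - f c)) by ring. rewrite Rabs_mult.
  pose proof (Rabs_pos k). pose proof (Rabs_pos (f u - f c)).
  apply Rle_lt_trans with ((Rabs k + 1) * Rabs (f u - f c)). nra.
  apply (Rmult_lt_compat_l (Rabs k + 1)) in H1'; [|lra].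
  replace ((Rabs k + 1) * (e / (Rabs k + 1))) with e in H1' by (field; lra). lra. Qed.

Lemma ccont_const k a b : ccont (fun _ => k) a b.
Proof. intros c Hc e He. exists 1; split; [lra|]. intros. unfold Rminus; rewrite Rplus_opp_r, Rabs_R0; auto. Qed.

Lemma Rmin_lip x y x' y' : Rabs (Rmin x y - Rmin x' y') <= Rmax (Rabs (x - x')) (Rabs (y - y')).
Proof. unfold Rmin, Rmax.
  unfold Rabs; repeat destruct Rle_dec; repeat destruct Rcase_abs; lra.
Qed.

Lemma ccont_min f g a b : ccont f a b -> ccont g a b -> ccont (fun t => Rmin (f t) (g t)) a b.
Proof. intros Hf Hg c Hc e He.
  destruct (Hf c Hc e He) as [d1 [H1 H1']]. destruct (Hg c Hc e He) as [d2 [H2 H2']].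
  exists (Rmin d1 d2); split. apply Rmin_glb_lt; auto.
  intros u Hu Hu2. pose proof (Rmin_l d1 d2). pose proof (Rmin_r d1 d2).
  specialize (H1' u Hu ltac:(lra)). specialize (H2' u Hu ltac:(lra)).
  eapply Rle_lt_trans. apply Rmin_lip. unfold Rmax. destruct Rle_dec; auto. Qed.

Lemma ccont_sumk n (f : nat -> R -> R) a b : (forall k, (1 <= k <= n)%nat -> ccont (f k) a b) ->
  ccont (fun t => sumk n (fun k => f k t)) a b.
Proof. induction n; intros H; simpl. apply ccont_const.
  apply (ccont_plus (fun t => sumk n (fun k => f k t)) (f (S n))).
  apply IHn; intros; apply H; lia. apply H; lia. Qed.

Lemma ccont_bound f T : 0 <= T -> ccont f 0 T -> exists M, forall t, 0 <= t <= T -> Rabs (f t) <= M.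
Proof. intros HT Hc.
  set (p := fun x => Rmax 0 (Rmin T x)).
  assert (Hp : forall x, 0 <= p x <= T).
  { intros x; unfold p, Rmax, Rmin; repeat destruct Rle_dec; lra. }
  assert (Hp2 : forall x c, 0 <= c <= T -> Rabs (p x - c) <= Rabs (x - c)).
  { intros x c Hc0. unfold p, Rmax, Rmin, Rabs; repeat destruct Rle_dec; repeat destruct Rcase_abs; lra. }
  assert (Hp3 : forall x, 0 <= x <= T -> p x = x).
  { intros x Hx; unfold p, Rmax, Rmin; repeat destruct Rle_dec; lra. }
  destruct (continuity_ab_maj (fun x => Rabs (f (p x))) 0 T HT) as [Mx [HM _]].
  - intros c Hc0 e He. destruct (Hc c Hc0 e He) as [dl [Hdl Hd]].
    exists dl; split; auto. intros x [_ Hx]. simpl. unfold R_dist in *.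
    rewrite (Hp3 c Hc0). eapply Rle_lt_trans. apply Rabs_triang_inv2.
    apply Hd. apply Hp.
    eapply Rle_lt_trans. apply Hp2; auto. auto.
  - exists (Rabs (f (p Mx))). intros t Ht. rewrite <- (Hp3 t Ht). apply HM; auto. Qed.

Fixpoint minK (n : nat) (g : nat -> R) : R :=
  match n with O => g 1%nat | S m => Rmin (minK m g) (g (S m)) end.

Lemma minK_le n g k : (1 <= k <= n)%nat -> minK n g <= g k.
Proof. induction n; intros Hk; [lia|]. simpl.
  destruct (Nat.eq_dec k (S n)). subst. apply Rmin_r.
  eapply Rle_trans. apply Rmin_l. apply IHn. lia. Qed.

Lemma minK_attained n g : (1 <= n)%nat -> exists k, (1 <= k <= n)%nat /\ minK n g = g k.
Proof. induction n; intros Hn; [lia|]. simpl.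
  destruct (Nat.eq_dec n 0). subst. simpl. exists 1%nat. split; [lia|]. unfold Rmin; destruct Rle_dec; lra.
  destruct IHn as [k [Hk E]]; [lia|].
  unfold Rmin; destruct Rle_dec. exists k; split; [lia|auto]. exists (S n); split; [lia|auto]. Qed.

Lemma ccont_minK n (g : nat -> R -> R) a b : (forall k, (1 <= k <= n)%nat -> ccont (g k) a b) ->
  (1 <= n)%nat -> ccont (fun t => minK n (fun k => g k t)) a b.
Proof. induction n; intros H Hn; [lia|]. simpl.
  destruct (Nat.eq_dec n 0). subst. simpl.
  apply (ccont_min (g 1%nat) (g 1%nat)); apply H; lia.
  apply (ccont_min (fun t => minK n (fun k => g k t)) (g (S n))).
  apply IHn; [intros; apply H; lia|lia]. apply H; lia. Qed.

Lemma left_decr f tau l a : a < tau -> derivable_pt_lim f tau l -> 0 < l -> f tau = 0 ->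
  (forall s, a <= s < tau -> f s > 0) -> False.
Proof. intros Ha Hd Hl Hf Hs.
  destruct (Hd (l/2)) as [dl Hdl]; [lra|].
  set (h := - Rmin (dl/2) ((tau - a)/2)).
  pose proof (cond_pos dl).
  assert (Hm1 : Rmin (dl/2) ((tau-a)/2) <= dl/2) by apply Rmin_l.
  assert (Hm2 : Rmin (dl/2) ((tau-a)/2) <= (tau-a)/2) by apply Rmin_r.
  assert (Hm3 : 0 < Rmin (dl/2) ((tau-a)/2)) by (apply Rmin_glb_lt; lra).
  specialize (Hdl h ltac:(unfold h; lra) ltac:(unfold h; rewrite Rabs_left; lra)).
  assert (f (tau + h) > 0) by (apply Hs; unfold h; lra).
  rewrite Hf in Hdl. apply Rabs_def2 in Hdl. destruct Hdl as [H1 H2].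
  assert (h < 0) by (unfold h; lra).
  assert ((f (tau + h) - 0) / h < 0).
  { unfold Rdiv. assert (/ h < 0) by (apply Rinv_lt_0_compat; lra). nra. }
  lra. Qed.

Lemma prod_low a b al be A B : a >= - al -> b >= - be -> Rabs a <= A -> Rabs b <= B ->
  0 <= al -> 0 <= be -> a * b >= - (A * be + B * al).
Proof. intros H1 H2 H3 H4 H5 H6. unfold Rabs in *. repeat destruct Rcase_abs; nra. Qed.

Lemma exp_small d e : 0 < d -> 0 < e -> exists tau, 0 < tau /\ exp (- d * tau) <= e.
Proof. intros Hd He. exists ((Rabs (ln e) + 1) / d). split.
  apply Rdiv_lt_0_compat; [pose proof (Rabs_pos (ln e)); lra| auto].
  assert (exp (- d * ((Rabs (ln e) + 1) / d)) < exp (ln e)).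
  { apply exp_increasing.
  replace (- d * ((Rabs (ln e) + 1) / d)) with (- (Rabs (ln e) + 1)) by (field; lra).
  pose proof (Rle_abs (- ln e)). rewrite Rabs_Ropp in H. lra. }
  rewrite exp_ln in H; auto; lra. Qed.

Lemma pow2_big x y : 0 < x -> exists j : nat, 2 ^ j * x > y.
Proof. intros Hx. destruct (archimed (y / x)) as [H _].
  assert (Hb : forall j, 2 ^ j >= INR j + 1).
  { induction j. simpl; lra. rewrite S_INR. simpl. pose proof (pos_INR j). lra. }
  destruct (Rle_or_lt (IZR (up (y/x))) 0).
  - exists 0%nat. simpl. assert (y / x < 0) by lra.
    assert (y < 0). { apply (Rmult_lt_compat_r x) in H1; auto. unfold Rdiv in H1.
      rewrite Rmult_assoc, Rinv_l, Rmult_1_r, Rmult_0_l in H1; lra. } lra.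
  - exists (Z.to_nat (up (y/x))). specialize (Hb (Z.to_nat (up (y/x)))).
    rewrite INR_IZR_INZ, Z2Nat.id in Hb. 2: { apply le_IZR. lra. }
    assert (y / x < 2 ^ Z.to_nat (up (y/x))) by lra.
    apply (Rmult_lt_compat_r x) in H1; auto. unfold Rdiv in H1.
    rewrite Rmult_assoc, Rinv_l, Rmult_1_r in H1; lra. Qed.

Lemma const_sol f d N : 0 < d -> right_cont0 f -> f 0 = N ->
  (forall t, 0 < t -> derivable_pt_lim f t (d * (N - f t))) -> forall t, 0 <= t -> f t = N.
Proof. intros Hd Hr H0 Hder t Ht.
  destruct (Req_dec t 0) as [->|Htn]; auto.
  set (g := fun s => (f s - N) * exp (d * s)).
  assert (Hg : forall s, 0 < s -> derivable_pt_lim g s 0).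
  { intros s Hs. unfold g. replace 0 with (d * (N - f s) * exp (d*s) + (f s - N) * (d * exp (d*s))) by ring.
    apply (derivable_pt_lim_mult (fun s => f s - N) (fun s => exp (d*s))).
    replace (d * (N - f s)) with (d * (N - f s) - 0) by ring. apply derivable_pt_lim_minus.
    auto. apply derivable_pt_lim_const. apply dexp. }
  assert (Hc : forall s, 0 < s <= t -> g s = g t).
  { intros s Hs. apply Rle_antisym.
    - assert (- g t <= - g s). apply (nonincr (fun u => - g u) (fun _ => 0)); try lra.
      intros c Hc. replace 0 with (-0) by ring. apply derivable_pt_lim_opp. apply Hg; lra.
      intros; lra. lra.
    - apply (nonincr g (fun _ => 0)); try lra. intros c Hc; apply Hg; lra. intros; lra. }
  assert (g t = 0).
  { destruct (Req_dec (g t) 0) as [|Hne]; auto. exfalso.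
    assert (Hpos : 0 < Rabs (g t)) by (apply Rabs_pos_lt; auto).
    set (e := Rabs (g t) / exp (d * t)).
    assert (He : 0 < e) by (apply Rdiv_lt_0_compat; auto; apply exp_pos).
    destruct (Hr e He) as [dl [Hdl Hdl']].
    set (s := Rmin (dl/2) t).
    assert (Hs1 : 0 < s) by (apply Rmin_glb_lt; lra).
    assert (Hs2 : s <= t) by apply Rmin_r. assert (Hs3 : s <= dl/2) by apply Rmin_l.
    specialize (Hdl' s ltac:(lra)). rewrite H0 in Hdl'.
    rewrite <- (Hc s ltac:(lra)) in Hpos. unfold e, g in *.
    rewrite <- (Hc s ltac:(lra)) in Hdl'. unfold g in Hdl'.
    rewrite Rabs_mult, (Rabs_right (exp (d*s))) in Hdl' by (apply Rle_ge, Rlt_le, exp_pos).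
    assert (exp (d * s) <= exp (d * t)).
    { destruct (Req_dec s t). subst s; rewrite H; lra. apply Rlt_le, exp_increasing. nra. }
    pose proof (exp_pos (d*t)). pose proof (exp_pos (d*s)). pose proof (Rabs_pos (f s - N)).
    apply (Rmult_lt_compat_r (exp (d*t))) in Hdl'; auto.
    unfold Rdiv in Hdl'. rewrite Rmult_assoc, Rinv_l, Rmult_1_r in Hdl' by lra. nra. }
  unfold g in H. pose proof (exp_pos (d*t)).
  assert (f t - N = 0) by (apply (Rmult_eq_reg_r (exp (d*t))); [lra|lra]). lra. Qed.

Lemma dz f t l eps K : derivable_pt_lim f t l ->
  derivable_pt_lim (fun u => f u + eps * exp (K * u)) t (l + eps * (K * exp (K * t))).
Proof. intros H. apply (derivable_pt_lim_plus f (fun u => eps * exp (K*u))); auto.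
  apply (derivable_pt_lim_scal (fun u => exp (K*u))). apply dexp. Qed.

Lemma ccont_der f a b : (forall c, a <= c <= b -> exists l, derivable_pt_lim f c l) -> ccont f a b.
Proof. intros H c Hc e He. destruct (H c Hc) as [l Hl].
  destruct (cpt_eps f c (derivable_continuous_pt f c (exist _ l Hl)) e He) as [dl [Hdl Hd']].
  exists dl; split; auto. Qed.

Lemma rc_plus f g : right_cont0 f -> right_cont0 g -> right_cont0 (fun t => f t + g t).
Proof. intros Hf Hg e He.
  destruct (Hf (e/2)) as [d1 [H1 H1']]; [lra|]. destruct (Hg (e/2)) as [d2 [H2 H2']]; [lra|].
  exists (Rmin d1 d2); split. apply Rmin_glb_lt; auto.
  intros t Ht. pose proof (Rmin_l d1 d2). pose proof (Rmin_r d1 d2).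
  specialize (H1' t ltac:(lra)). specialize (H2' t ltac:(lra)).
  replace (f t + g t - (f 0 + g 0)) with ((f t - f 0) + (g t - g 0)) by ring.
  pose proof (Rabs_triang (f t - f 0) (g t - g 0)). lra. Qed.

Lemma bound_agg n (f : nat -> R -> R) T :
  (forall k, (1 <= k <= n)%nat -> exists M, forall t, 0 <= t <= T -> Rabs (f k t) <= M) ->
  exists M, 0 <= M /\ forall k t, (1 <= k <= n)%nat -> 0 <= t <= T -> Rabs (f k t) <= M.
Proof. induction n; intros H.
  - exists 0; split; [lra|]. intros; lia.
  - destruct IHn as [M1 [HM1 HM1']]. intros; apply H; lia.
    destruct (H (S n)) as [M2 HM2]; [lia|].
    exists (M1 + Rabs M2); split. pose proof (Rabs_pos M2); lra.
    intros k t Hk Ht. destruct (Nat.eq_dec k (S n)). subst.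
    specialize (HM2 t Ht). pose proof (Rle_abs M2). lra.
    specialize (HM1' k t ltac:(lia) Ht). pose proof (Rabs_pos M2). lra. Qed.

Lemma theta_lb n p phi (I : nat -> R -> R) t m : 0 < avgk n p ->
  (forall k, (1 <= k <= n)%nat -> 0 <= phi k * p k) -> (forall k, (1 <= k <= n)%nat -> I k t >= m) ->
  Theta n p phi I t >= m * (/ avgk n p * sumk n (fun k => phi k * p k)).
Proof. intros Ha Hw HI. unfold Theta.
  assert (sumk n (fun k => m * (phi k * p k)) <= sumk n (fun i => phi i * p i * I i t)).
  { apply sumk_le. intros k Hk. specialize (Hw k Hk). specialize (HI k Hk). nra. }
  rewrite sumk_scal in H. pose proof (Rinv_0_lt_compat _ Ha). nra. Qed.

Lemma theta_ub n p phi (I : nat -> R -> R) t m : 0 < avgk n p ->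
  (forall k, (1 <= k <= n)%nat -> 0 <= phi k * p k) -> (forall k, (1 <= k <= n)%nat -> I k t <= m) ->
  Theta n p phi I t <= m * (/ avgk n p * sumk n (fun k => phi k * p k)).
Proof. intros Ha Hw HI. unfold Theta.
  assert (sumk n (fun i => phi i * p i * I i t) <= sumk n (fun k => m * (phi k * p k))).
  { apply sumk_le. intros k Hk. specialize (Hw k Hk). specialize (HI k Hk). nra. }
  rewrite sumk_scal in H. pose proof (Rinv_0_lt_compat _ Ha). nra. Qed.

Lemma Rmin_cases a b : Rmin a b = a \/ Rmin a b = b.
Proof. unfold Rmin; destruct Rle_dec; auto. Qed.

Lemma LamN b d Phis k : d + b * INR k * Phis <> 0 -> Lam b d Phis k = d * Nstar b d Phis k.
Proof. intros H. unfold Lam, Nstar. field; auto. Qed.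

Lemma Nst_pos b d Phis k : 0 < b -> 0 < d -> 0 < Phis -> (1 <= k)%nat ->
  0 < Nstar b d Phis k /\ 0 < d + b * INR k * Phis.
Proof. intros. assert (0 < INR k) by (apply lt_0_INR; lia).
  assert (0 < b * INR k * Phis) by (apply Rmult_lt_0_compat; [apply Rmult_lt_0_compat|]; auto).
  split; [|lra]. unfold Nstar. apply Rdiv_lt_0_compat; lra. Qed.

Lemma Rabs_invb x a : Rabs x <= a -> - a <= x <= a.
Proof. unfold Rabs; destruct Rcase_abs; intros; lra. Qed.

Lemma ccont_sub f a b a' b' : ccont f a b -> a <= a' -> b' <= b -> ccont f a' b'.
Proof. intros H H1 H2 c Hc e He. destruct (H c ltac:(lra) e He) as [dl [Hdl Hd]].
  exists dl; split; auto. intros u Hu Hu2. apply Hd; auto; lra. Qed.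

Lemma nonneg_of_eps x E : 0 < E -> (forall eps, 0 < eps -> 0 < x + eps * E) -> 0 <= x.
Proof. intros HE H. destruct (Rle_or_lt 0 x); auto.
  specialize (H (- x / (2 * E))). assert (0 < - x / (2*E)) by (apply Rdiv_lt_0_compat; lra).
  specialize (H H1). replace (x + - x / (2 * E) * E) with (x / 2) in H by (field; lra). lra. Qed.

Lemma LB1 r d tau s eps1 X0 Y N : 0 < d -> d <= r -> 0 <= tau -> tau <= s ->
  exp (- d * tau) <= eps1 -> X0 - Y <= N -> 0 <= N ->
  Y + (X0 - Y) * exp (- r * s) <= Y + N * eps1.
Proof. intros. pose proof (exp_pos (- r * s)).
  assert (exp (- r * s) <= exp (- d * tau)).
  { destruct (Req_dec (- r * s) (- d * tau)) as [E|E]. rewrite E; lra.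
    apply Rlt_le, exp_increasing. assert (d * tau <= r * s) by nra. lra. }
  assert ((X0 - Y) * exp (- r * s) <= N * exp (- r * s)) by (apply Rmult_le_compat_r; lra).
  assert (N * exp (- r * s) <= N * eps1) by (apply Rmult_le_compat_l; lra). lra. Qed.

Lemma sol_basic
  (n : nat) (p : nat -> R) (b d Phis : R)
  (lam phi mu : nat -> R) (beta gamma eta omega delta : R)
  (Hn : (1 <= n)%nat)
  (Hp : forall k, (1 <= k <= n)%nat -> 0 < p k)
  (Hbd : b > d) (Hd : d > 0) (HPhis : Phis > 0)
  (Hlam : forall k, (1 <= k <= n)%nat -> 0 < lam k)
  (Hphi : forall k, (1 <= k <= n)%nat -> 0 < phi k)
  (Hmu : forall k, (1 <= k <= n)%nat -> 0 < mu k)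
  (Hbeta : 0 < beta) (Hgamma : 0 < gamma) (Heta : 0 < eta) (Homega : 0 < omega)
  (Hdelta : 0 <= delta <= 1)
  (S V I Q : nat -> R -> R)
  (Hsol : is_SVIQS_solution n p lam phi mu b d Phis beta gamma eta omega delta S V I Q)
  (Hinit : forall k, (1 <= k <= n)%nat ->
         0 <= S k 0 /\ 0 <= V k 0 /\ 0 <= I k 0 /\ 0 <= Q k 0 /\
         S k 0 + V k 0 + I k 0 + Q k 0 = Nstar b d Phis k) :
  (forall k, (1 <= k <= n)%nat -> forall t, 0 <= t ->
     S k t + V k t + I k t + Q k t = Nstar b d Phis k) /\
  (forall k, (1 <= k <= n)%nat -> forall t, 0 <= t ->
     0 <= S k t /\ 0 <= V k t /\ 0 <= I k t /\ 0 <= Q k t).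
Proof.
  assert (Havg : 0 < avgk n p).
  { unfold avgk. apply sumk_pos; auto. intros k Hk. apply Rmult_lt_0_compat; [apply lt_0_INR; lia| auto]. }
  split.
  { intros k Hk. destruct (Hsol k Hk) as [r1 [r2 [r3 [r4 Hdd]]]].
    destruct (Nst_pos b d Phis k ltac:(lra) Hd HPhis ltac:(lia)) as [HN HD].
    apply (const_sol (fun t => S k t + V k t + I k t + Q k t) d); [lra| | apply Hinit; auto |].
    - repeat apply rc_plus; auto.
    - intros t Ht. destruct (Hdd t Ht) as [a1 [a2 [a3 a4]]].
      match goal with |- derivable_pt_lim _ _ ?l => replace l with
        ((Lam b d Phis k - lam k * S k t * Theta n p phi I t + gamma * I k t
         + eta * Q k t + omega * V k t - (mu k + d) * S k t) +
         (mu k * S k t - delta * lam k * V k t * Theta n p phi I t - (d + omega) * V k t) +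
         (lam k * S k t * Theta n p phi I t + delta * lam k * V k t * Theta n p phi I t
         - (gamma + beta + d) * I k t) + (beta * I k t - (eta + d) * Q k t)) end.
      2: { rewrite LamN by lra. ring. }
      repeat apply derivable_pt_lim_plus; auto.
      }
  intros k0 Hk0 t0 Ht0.
  set (T := t0 + 1).
  assert (HT : 0 <= T) by (unfold T; lra).
  assert (Hcc : forall (X : nat -> R -> R) k, (1 <= k <= n)%nat -> right_cont0 (X k) ->
     (forall t, 0 < t -> exists l, derivable_pt_lim (X k) t l) -> ccont (X k) 0 T).
  { intros X k Hk Hr Hd'. apply ccont_sol; [lra| |auto]. intros c Hc Hc0. apply Hd'; auto. }
  assert (HccS : forall k, (1 <= k <= n)%nat -> ccont (S k) 0 T).
  { intros k Hk. destruct (Hsol k Hk) as [r1 [r2 [r3 [r4 Hdd]]]]. apply Hcc; auto.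
    intros t Ht. destruct (Hdd t Ht) as [a1 _]. eexists; eauto. }
  assert (HccV : forall k, (1 <= k <= n)%nat -> ccont (V k) 0 T).
  { intros k Hk. destruct (Hsol k Hk) as [r1 [r2 [r3 [r4 Hdd]]]]. apply Hcc; auto.
    intros t Ht. destruct (Hdd t Ht) as [_ [a1 _]]. eexists; eauto. }
  assert (HccI : forall k, (1 <= k <= n)%nat -> ccont (I k) 0 T).
  { intros k Hk. destruct (Hsol k Hk) as [r1 [r2 [r3 [r4 Hdd]]]]. apply Hcc; auto.
    intros t Ht. destruct (Hdd t Ht) as [_ [_ [a1 _]]]. eexists; eauto. }
  assert (HccQ : forall k, (1 <= k <= n)%nat -> ccont (Q k) 0 T).
  { intros k Hk. destruct (Hsol k Hk) as [r1 [r2 [r3 [r4 Hdd]]]]. apply Hcc; auto.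
    intros t Ht. destruct (Hdd t Ht) as [_ [_ [_ a1]]]. eexists; eauto. }
  destruct (bound_agg n S T) as [MS [HMS HMS']]. intros; apply ccont_bound; auto.
  destruct (bound_agg n V T) as [MV [HMV HMV']]. intros; apply ccont_bound; auto.
  destruct (bound_agg n I T) as [MI [HMI HMI']]. intros; apply ccont_bound; auto.
  destruct (bound_agg n Q T) as [MQ [HMQ HMQ']]. intros; apply ccont_bound; auto.
  set (M := MS + MV + MI + MQ).
  assert (HM : 0 <= M) by (unfold M; lra).
  assert (HbS : forall k t, (1 <= k <= n)%nat -> 0 <= t <= T -> Rabs (S k t) <= M).
  { intros k t Hk Ht. specialize (HMS' k t Hk Ht). unfold M; lra. }
  assert (HbV : forall k t, (1 <= k <= n)%nat -> 0 <= t <= T -> Rabs (V k t) <= M).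
  { intros k t Hk Ht. specialize (HMV' k t Hk Ht). unfold M; lra. }
  assert (HbI : forall k t, (1 <= k <= n)%nat -> 0 <= t <= T -> Rabs (I k t) <= M).
  { intros k t Hk Ht. specialize (HMI' k t Hk Ht). unfold M; lra. }
  set (Ls := sumk n lam). set (Ms := sumk n mu).
  set (Cw := / avgk n p * sumk n (fun k => phi k * p k)).
  assert (HCw : 0 < Cw).
  { unfold Cw. apply Rmult_lt_0_compat. apply Rinv_0_lt_compat; auto.
    apply sumk_pos; auto. intros; apply Rmult_lt_0_compat; auto. }
  assert (Hw : forall k, (1 <= k <= n)%nat -> 0 <= phi k * p k).
  { intros k Hk. apply Rlt_le, Rmult_lt_0_compat; auto. }
  assert (HLs : forall k, (1 <= k <= n)%nat -> lam k <= Ls).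
  { intros k Hk; apply sumk_term_le; auto. intros; apply Rlt_le; auto. }
  assert (HMs : forall k, (1 <= k <= n)%nat -> mu k <= Ms).
  { intros k Hk; apply sumk_term_le; auto. intros; apply Rlt_le; auto. }
  assert (HLs0 : 0 <= Ls) by (pose proof (HLs 1%nat ltac:(lia)); pose proof (Hlam 1%nat ltac:(lia)); lra).
  assert (HMs0 : 0 <= Ms) by (pose proof (HMs 1%nat ltac:(lia)); pose proof (Hmu 1%nat ltac:(lia)); lra).
  assert (HTh : forall t, 0 <= t <= T -> - (M * Cw) <= Theta n p phi I t <= M * Cw).
  { intros t Ht. split.
    - pose proof (theta_lb n p phi I t (-M) Havg Hw). unfold Cw.
      assert (- M * (/ avgk n p * sumk n (fun k => phi k * p k)) <= Theta n p phi I t).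
      { apply Rge_le, H. intros k Hk. specialize (HbI k t Hk Ht). apply Rabs_invb in HbI. lra. }
      lra.
    - apply theta_ub; auto. intros k Hk. specialize (HbI k t Hk Ht). apply Rabs_invb in HbI. lra. }
  set (K := 1 + gamma + eta + omega + beta + Ms + 5 * Ls * Cw * M).
  assert (Key : forall eps, 0 < eps -> forall u, 0 <= u <= T -> forall k, (1 <= k <= n)%nat ->
     0 < S k u + eps * exp (K * u) /\ 0 < V k u + eps * exp (K * u) /\
     0 < I k u + eps * exp (K * u) /\ 0 < Q k u + eps * exp (K * u)).
  { intros eps Heps.
    set (G := fun u => minK n (fun k => Rmin (Rmin (S k u + eps * exp (K*u)) (V k u + eps*exp (K*u)))
                                            (Rmin (I k u + eps*exp (K*u)) (Q k u + eps*exp (K*u))))).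
    assert (HG : forall u, 0 <= u <= T -> 0 < G u).
    { intros u1 Hu1. destruct (Rlt_or_le 0 (G u1)) as [|Hle]; auto. exfalso.
      assert (HG0 : 0 < G 0).
      { unfold G. destruct (minK_attained n (fun k => Rmin (Rmin (S k 0 + eps * exp (K*0)) (V k 0 + eps*exp (K*0)))
                                            (Rmin (I k 0 + eps*exp (K*0)) (Q k 0 + eps*exp (K*0)))) Hn) as [k [Hk ->]].
        rewrite Rmult_0_r, exp_0. destruct (Hinit k Hk) as [i1 [i2 [i3 [i4 _]]]].
        repeat apply Rmin_glb_lt; lra. }
      assert (Hu1p : 0 < u1). { destruct (Req_dec u1 0). subst; lra. lra. }
      destruct (first_time G 0 u1) as [tau [Htau [HGt Hbef]]]; auto.
      { unfold G. apply ccont_minK; auto. intros k Hk.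
        assert (Hex : ccont (fun u => eps * exp (K*u)) 0 u1).
        { apply ccont_scal. apply ccont_der. intros; eexists; apply dexp. }
        repeat apply ccont_min; apply ccont_plus; auto.
        all: eapply ccont_sub; [ | apply Rle_refl | apply (proj2 Hu1)]; auto. }
      set (e := eps * exp (K * tau)).
      assert (He : 0 < e) by (unfold e; apply Rmult_lt_0_compat; auto; apply exp_pos).
      assert (HKe : eps * (K * exp (K * tau)) = e + gamma*e + eta*e + omega*e + beta*e + Ms*e + 5*(Ls*Cw*M*e))
        by (unfold e, K; ring).
      assert (Hall : forall k, (1 <= k <= n)%nat ->
         S k tau >= - e /\ V k tau >= - e /\ I k tau >= - e /\ Q k tau >= - e).
      { intros k Hk. pose proof (minK_le n (fun k => Rmin (Rmin (S k tau + eps * exp (K*tau)) (V k tau + eps*exp (K*tau)))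
                                            (Rmin (I k tau + eps*exp (K*tau)) (Q k tau + eps*exp (K*tau)))) k Hk) as H1.
        fold (G tau) in H1. rewrite HGt in H1. simpl in H1. fold e in H1.
        pose proof (Rmin_l (Rmin (S k tau + e) (V k tau + e)) (Rmin (I k tau + e) (Q k tau + e))).
        pose proof (Rmin_r (Rmin (S k tau + e) (V k tau + e)) (Rmin (I k tau + e) (Q k tau + e))).
        pose proof (Rmin_l (S k tau + e) (V k tau + e)). pose proof (Rmin_r (S k tau + e) (V k tau + e)).
        pose proof (Rmin_l (I k tau + e) (Q k tau + e)). pose proof (Rmin_r (I k tau + e) (Q k tau + e)).
        lra. }
      destruct (minK_attained n (fun k => Rmin (Rmin (S k tau + eps * exp (K*tau)) (V k tau + eps*exp (K*tau)))
                                            (Rmin (I k tau + eps*exp (K*tau)) (Q k tau + eps*exp (K*tau)))) Hn)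
        as [kk [Hkk Hmin]].
      fold (G tau) in Hmin. rewrite HGt in Hmin.
      assert (Hb4 : forall s, 0 <= s < tau ->
        0 < S kk s + eps * exp (K*s) /\ 0 < V kk s + eps * exp (K*s) /\
        0 < I kk s + eps * exp (K*s) /\ 0 < Q kk s + eps * exp (K*s)).
      { intros s Hs. pose proof (Hbef s Hs) as H0. unfold G in H0.
        pose proof (minK_le n (fun k => Rmin (Rmin (S k s + eps * exp (K*s)) (V k s + eps*exp (K*s)))
                                            (Rmin (I k s + eps*exp (K*s)) (Q k s + eps*exp (K*s)))) kk Hkk) as H1.
        simpl in H1.
        pose proof (Rmin_l (Rmin (S kk s + eps * exp (K*s)) (V kk s + eps * exp (K*s))) (Rmin (I kk s + eps * exp (K*s)) (Q kk s + eps * exp (K*s)))).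
        pose proof (Rmin_r (Rmin (S kk s + eps * exp (K*s)) (V kk s + eps * exp (K*s))) (Rmin (I kk s + eps * exp (K*s)) (Q kk s + eps * exp (K*s)))).
        pose proof (Rmin_l (S kk s + eps * exp (K*s)) (V kk s + eps * exp (K*s))).
        pose proof (Rmin_r (S kk s + eps * exp (K*s)) (V kk s + eps * exp (K*s))).
        pose proof (Rmin_l (I kk s + eps * exp (K*s)) (Q kk s + eps * exp (K*s))).
        pose proof (Rmin_r (I kk s + eps * exp (K*s)) (Q kk s + eps * exp (K*s))).
        lra. }
      assert (HtT : 0 <= tau <= T) by lra.
      set (Th := Theta n p phi I tau).
      assert (HTh1 : - (M * Cw) <= Th <= M * Cw) by (apply HTh; auto).
      assert (HTh2 : Th >= - e * Cw).
      { unfold Th, Cw. apply theta_lb; auto. intros k Hk; apply (Hall k Hk). }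
      destruct (Hsol kk Hkk) as [_ [_ [_ [_ Hdd]]]].
      destruct (Hdd tau ltac:(lra)) as [dS [dV [dI dQ]]]. fold Th in dS, dV, dI, dQ.
      destruct (Hall kk Hkk) as [aS [aV [aI aQ]]].
      pose proof (Hlam kk Hkk). pose proof (HLs kk Hkk). pose proof (Hmu kk Hkk). pose proof (HMs kk Hkk).
      destruct (Nst_pos b d Phis kk ltac:(lra) Hd HPhis ltac:(lia)) as [HN HD].
      assert (HLam : 0 < Lam b d Phis kk) by (rewrite LamN by lra; apply Rmult_lt_0_compat; lra).
      assert (HMCw : 0 <= M * Cw) by (apply Rmult_le_pos; lra).
      destruct (Rmin_cases (Rmin (S kk tau + eps * exp (K*tau)) (V kk tau + eps * exp (K*tau)))
                    (Rmin (I kk tau + eps * exp (K*tau)) (Q kk tau + eps * exp (K*tau)))) as [E1|E1];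
        rewrite E1 in Hmin; clear E1.
      + destruct (Rmin_cases (S kk tau + eps * exp (K*tau)) (V kk tau + eps * exp (K*tau))) as [E2|E2];
          rewrite E2 in Hmin; clear E2.
        * apply (left_decr _ tau _ 0 ltac:(lra) (dz _ _ _ eps K dS)); auto.
          2: { intros s Hs; apply (Hb4 s Hs). }
          fold e in Hmin. assert (HS : S kk tau = - e) by lra. rewrite HS.
          assert (A1 : lam kk * (- e) * Th <= Ls * Cw * M * e).
          { assert (lam kk * e * (- Th) <= lam kk * e * (M * Cw)) by (apply Rmult_le_compat_l; nra).
            assert (lam kk * e * (M * Cw) <= Ls * e * (M * Cw)) by (apply Rmult_le_compat_r; nra). nra. }
          assert (0 <= gamma * (I kk tau + e)) by (apply Rmult_le_pos; lra).
          assert (0 <= eta * (Q kk tau + e)) by (apply Rmult_le_pos; lra).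
          assert (0 <= omega * (V kk tau + e)) by (apply Rmult_le_pos; lra).
          assert (0 <= (mu kk + d) * e) by (apply Rmult_le_pos; lra).
          assert (0 <= Ms * e) by (apply Rmult_le_pos; lra).
          assert (0 <= Ls * Cw * M * e) by (apply Rmult_le_pos; [apply Rmult_le_pos; [apply Rmult_le_pos|]|]; lra).
          assert (0 <= gamma * e) by (apply Rmult_le_pos; lra).
          assert (0 <= eta * e) by (apply Rmult_le_pos; lra).
          assert (0 <= omega * e) by (apply Rmult_le_pos; lra).
          assert (0 <= beta * e) by (apply Rmult_le_pos; lra).
          rewrite HKe. lra.
        * apply (left_decr _ tau _ 0 ltac:(lra) (dz _ _ _ eps K dV)); auto.
          2: { intros s Hs; apply (Hb4 s Hs). }
          fold e in Hmin. assert (HS : V kk tau = - e) by lra. rewrite HS.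
          assert (A1 : delta * lam kk * (- e) * Th <= Ls * Cw * M * e).
          { assert (lam kk * e * (- Th) <= lam kk * e * (M * Cw)) by (apply Rmult_le_compat_l; nra).
            assert (lam kk * e * (M * Cw) <= Ls * e * (M * Cw)) by (apply Rmult_le_compat_r; nra).
            assert (0 <= lam kk * e * (M * Cw)) by (apply Rmult_le_pos; nra).
            assert (delta * (lam kk * e * (- Th)) <= lam kk * e * (M * Cw)) by nra. nra. }
          assert (mu kk * S kk tau >= - Ms * e) by nra.
          assert (0 <= (d + omega) * e) by (apply Rmult_le_pos; lra).
          assert (0 <= Ls * Cw * M * e) by (apply Rmult_le_pos; [apply Rmult_le_pos; [apply Rmult_le_pos|]|]; lra).
          assert (0 <= gamma * e) by (apply Rmult_le_pos; lra).
          assert (0 <= eta * e) by (apply Rmult_le_pos; lra).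
          assert (0 <= omega * e) by (apply Rmult_le_pos; lra).
          assert (0 <= beta * e) by (apply Rmult_le_pos; lra).
          rewrite HKe. lra.
      + destruct (Rmin_cases (I kk tau + eps * exp (K*tau)) (Q kk tau + eps * exp (K*tau))) as [E2|E2];
          rewrite E2 in Hmin; clear E2.
        * apply (left_decr _ tau _ 0 ltac:(lra) (dz _ _ _ eps K dI)); auto.
          2: { intros s Hs; apply (Hb4 s Hs). }
          fold e in Hmin. assert (HS : I kk tau = - e) by lra. rewrite HS.
          assert (A0 : (S kk tau + delta * V kk tau) * Th >= - (2 * M * (e * Cw) + M * Cw * (2 * e))).
          { apply prod_low.
            - assert (delta * V kk tau >= - e) by nra. lra.
            - lra.
            - pose proof (HbS kk tau Hkk HtT). pose proof (HbV kk tau Hkk HtT).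
              apply Rabs_invb in H3. apply Rabs_invb in H4. apply Rabs_le. nra.
            - apply Rabs_le; lra.
            - lra.
            - nra. }
          assert (A1 : lam kk * ((S kk tau + delta * V kk tau) * Th) >= - (4 * (Ls * Cw * M * e))).
          { assert (0 <= M * Cw * e) by (apply Rmult_le_pos; lra).
            assert (lam kk * (M * Cw * e) <= Ls * (M * Cw * e)) by (apply Rmult_le_compat_r; lra).
            nra. }
          assert (0 <= (gamma + beta + d) * e) by (apply Rmult_le_pos; lra).
          assert (0 <= Ls * Cw * M * e) by (apply Rmult_le_pos; [apply Rmult_le_pos; [apply Rmult_le_pos|]|]; lra).
          assert (0 <= gamma * e) by (apply Rmult_le_pos; lra).
          assert (0 <= eta * e) by (apply Rmult_le_pos; lra).
          assert (0 <= omega * e) by (apply Rmult_le_pos; lra).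
          assert (0 <= beta * e) by (apply Rmult_le_pos; lra).
          assert (0 <= Ms * e) by (apply Rmult_le_pos; lra).
          rewrite HKe.
          replace (lam kk * S kk tau * Th + delta * lam kk * V kk tau * Th) with
            (lam kk * ((S kk tau + delta * V kk tau) * Th)) by ring. lra.
        * apply (left_decr _ tau _ 0 ltac:(lra) (dz _ _ _ eps K dQ)); auto.
          2: { intros s Hs; apply (Hb4 s Hs). }
          fold e in Hmin. assert (HS : Q kk tau = - e) by lra. rewrite HS.
          assert (0 <= beta * (I kk tau + e)) by (apply Rmult_le_pos; lra).
          assert (0 <= (eta + d) * e) by (apply Rmult_le_pos; lra).
          assert (0 <= Ls * Cw * M * e) by (apply Rmult_le_pos; [apply Rmult_le_pos; [apply Rmult_le_pos|]|]; lra).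
          assert (0 <= gamma * e) by (apply Rmult_le_pos; lra).
          assert (0 <= eta * e) by (apply Rmult_le_pos; lra).
          assert (0 <= omega * e) by (apply Rmult_le_pos; lra).
          assert (0 <= Ms * e) by (apply Rmult_le_pos; lra).
          rewrite HKe. lra. }
    intros u Hu k Hk. pose proof (HG u Hu) as H0. unfold G in H0.
    pose proof (minK_le n (fun k => Rmin (Rmin (S k u + eps * exp (K*u)) (V k u + eps*exp (K*u)))
                                            (Rmin (I k u + eps*exp (K*u)) (Q k u + eps*exp (K*u)))) k Hk) as H1.
    simpl in H1.
    pose proof (Rmin_l (Rmin (S k u + eps * exp (K*u)) (V k u + eps * exp (K*u))) (Rmin (I k u + eps * exp (K*u)) (Q k u + eps * exp (K*u)))).
    pose proof (Rmin_r (Rmin (S k u + eps * exp (K*u)) (V k u + eps * exp (K*u))) (Rmin (I k u + eps * exp (K*u)) (Q k u + eps * exp (K*u)))).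
    pose proof (Rmin_l (S k u + eps * exp (K*u)) (V k u + eps * exp (K*u))).
    pose proof (Rmin_r (S k u + eps * exp (K*u)) (V k u + eps * exp (K*u))).
    pose proof (Rmin_l (I k u + eps * exp (K*u)) (Q k u + eps * exp (K*u))).
    pose proof (Rmin_r (I k u + eps * exp (K*u)) (Q k u + eps * exp (K*u))).
    lra. }
  assert (Ht0T : 0 <= t0 <= T) by (unfold T; lra).
  pose proof (exp_pos (K * t0)) as HE.
  repeat split; apply (nonneg_of_eps _ (exp (K * t0)) HE); intros eps Heps;
    apply (Key eps Heps t0 Ht0T k0 Hk0).
Qed.


Theorem theorem4p9
  (n : nat) (p : nat -> R) (b d Phis : R)
  (lam phi mu : nat -> R) (beta gamma eta omega delta : R)
  (Hn : (1 <= n)%nat)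
  (Hp : forall k, (1 <= k <= n)%nat -> 0 < p k)
  (Hpsum : sumk n p = 1)
  (Hbd : b > d) (Hd : d > 0)
  (HPhis : Phis > 0)
  (HPhieq : Phis = / avgk n p *
                   sumk n (fun i => INR i * p i * b * Phis / (d + b * INR i * Phis)))
  (Hlam : forall k, (1 <= k <= n)%nat -> 0 < lam k)
  (Hphi : forall k, (1 <= k <= n)%nat -> 0 < phi k)
  (Hmu : forall k, (1 <= k <= n)%nat -> 0 < mu k)
  (Hbeta : 0 < beta) (Hgamma : 0 < gamma) (Heta : 0 < eta) (Homega : 0 < omega)
  (Hdelta : 0 <= delta <= 1)
  (HR0 : R0_SVIQS n p lam phi mu b d Phis beta gamma omega delta > 1) :
  exists eps, 0 < eps /\
    forall S V I Q : nat -> R -> R,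
      is_SVIQS_solution n p lam phi mu b d Phis beta gamma eta omega delta S V I Q ->
      (forall k, (1 <= k <= n)%nat ->
         0 <= S k 0 /\ 0 <= V k 0 /\ 0 <= I k 0 /\ 0 <= Q k 0 /\
         S k 0 + V k 0 + I k 0 + Q k 0 = Nstar b d Phis k) ->
      Itot n p I 0 > 0 ->
      (* liminf_{t -> oo} I(t) >= eps *)
      forall eta', 0 < eta' -> exists T, forall t, T <= t -> Itot n p I t >= eps - eta'.
Proof.
  pose proof Hdelta as [Hdl0 Hdl1].
  assert (Havg : 0 < avgk n p).
  { unfold avgk. apply sumk_pos; auto. intros k Hk. apply Rmult_lt_0_compat; [apply lt_0_INR; lia| auto]. }
  set (avg := avgk n p) in *.
  set (c := gamma + beta + d).
  assert (Hc : 0 < c) by (unfold c; lra).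
  set (r := eta + d).
  assert (Hr : 0 < r) by (unfold r; lra).
  set (N := Nstar b d Phis).
  assert (HN : forall k, (1 <= k <= n)%nat -> 0 < N k).
  { intros k Hk. apply (Nst_pos b d Phis k); lra || lia. }
  assert (HND : forall k, (1 <= k <= n)%nat -> d + b * INR k * Phis <> 0).
  { intros k Hk. destruct (Nst_pos b d Phis k ltac:(lra) Hd HPhis ltac:(lia)). lra. }
  set (w := fun k => lam k * phi k * p k).
  assert (Hw : forall k, (1 <= k <= n)%nat -> 0 < w k).
  { intros k Hk. unfold w. repeat apply Rmult_lt_0_compat; auto. }
  set (F0 := / avg * sumk n (fun k => w k * (N k * (omega + d + delta * mu k) / (omega + mu k + d)))).
  assert (HF0 : F0 > c).
  { assert (F0 = c * R0_SVIQS n p lam phi mu b d Phis beta gamma omega delta).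
    { unfold R0_SVIQS, F0. fold avg.
      rewrite (sumk_ext n (fun i => lam i * phi i * p i * Lam b d Phis i * (omega + d + delta * mu i)
                   / (d * (gamma + beta + d) * (omega + mu i + d)))
                (fun i => / c * (w i * (N i * (omega + d + delta * mu i) / (omega + mu i + d))))).
      rewrite sumk_scal. field. lra.
      intros k Hk. pose proof (Hmu k Hk). rewrite LamN by auto. unfold w, N, c. field. lra. }
    rewrite H. nra. }
  set (alpha := (F0 - c) / 2).
  assert (Halpha : 0 < alpha) by (unfold alpha; lra).
  set (K1 := / avg * sumk n (fun k => w k * N k)).
  set (K2 := / avg * sumk n (fun k => w k * (lam k * N k))).
  assert (HK1 : 0 < K1).
  { unfold K1. apply Rmult_lt_0_compat. apply Rinv_0_lt_compat; auto.
    apply sumk_pos; auto. intros k Hk; apply Rmult_lt_0_compat; auto. }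
  assert (HK2 : 0 < K2).
  { unfold K2. apply Rmult_lt_0_compat. apply Rinv_0_lt_compat; auto.
    apply sumk_pos; auto. intros k Hk; apply Rmult_lt_0_compat; auto. apply Rmult_lt_0_compat; auto. }
  set (rho := 1 + beta / r).
  assert (Hrho : 1 < rho) by (unfold rho; assert (0 < beta / r) by (apply Rdiv_lt_0_compat; auto); lra).
  set (eta0 := alpha * c / (2 * K2 * rho)).
  assert (Heta0 : 0 < eta0).
  { unfold eta0. apply Rdiv_lt_0_compat. nra. nra. }
  set (eps1 := alpha / (2 * K1 * (rho + 2))).
  assert (Heps1 : 0 < eps1) by (unfold eps1; apply Rdiv_lt_0_compat; nra).
  destruct (exp_small d eps1 Hd Heps1) as [tau [Htau Htau']].
  set (sL := (2 * c * tau + ln 2) / alpha).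
  assert (HsL : 0 < sL).
  { unfold sL. apply Rdiv_lt_0_compat; auto. assert (0 < ln 2) by (rewrite <- ln_1; apply ln_increasing; lra). nra. }
  set (L := 2 * tau + sL).
  assert (HL : 0 < L) by (unfold L; lra).
  assert (H2 : exp (- c * (2 * tau)) * exp (alpha * sL) = 2).
  { rewrite <- exp_plus. unfold sL. replace (- c * (2 * tau) + alpha * ((2 * c * tau + ln 2) / alpha)) with (ln 2)
      by (field; lra). apply exp_ln; lra. }
  set (epsT := eta0 * exp (- c * L)).
  assert (HepsT : 0 < epsT) by (unfold epsT; apply Rmult_lt_0_compat; auto; apply exp_pos).
  set (Phs := sumk n phi).
  assert (HPhs : 0 < Phs) by (unfold Phs; apply sumk_pos; auto).
  exists (avg * epsT / Phs). split. apply Rdiv_lt_0_compat; auto. apply Rmult_lt_0_compat; auto.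
  intros S V I Q Hsol Hinit HI0 eta' Heta'.
  destruct (sol_basic n p b d Phis lam phi mu beta gamma eta omega delta Hn Hp Hbd Hd HPhis Hlam Hphi Hmu
    Hbeta Hgamma Heta Homega Hdelta S V I Q Hsol Hinit) as [Hsum Hpos].
  set (Th := Theta n p phi I).
  set (Fv := fun t => / avg * sumk n (fun k => w k * (S k t + delta * V k t))).
  assert (HdTh : forall t, 0 < t -> derivable_pt_lim Th t (Th t * (Fv t - c))).
  { intros t Ht.
    assert (Hd1 : derivable_pt_lim (fun s => sumk n (fun i => phi i * p i * I i s)) t
       (sumk n (fun i => phi i * p i * (lam i * S i t * Theta n p phi I t + delta * lam i * V i t * Theta n p phi I t
         - (gamma + beta + d) * I i t)))).
    { apply (sumk_deriv n (fun i s => phi i * p i * I i s)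
        (fun i t => phi i * p i * (lam i * S i t * Theta n p phi I t + delta * lam i * V i t * Theta n p phi I t
         - (gamma + beta + d) * I i t))).
      intros k Hk. destruct (Hsol k Hk) as [_ [_ [_ [_ Hdd]]]]. destruct (Hdd t Ht) as [_ [_ [dI _]]].
      apply (derivable_pt_lim_scal (I k)). auto. }
    unfold Th. unfold Theta at 1.
    change (fun t0 => / avgk n p * sumk n (fun i => phi i * p i * I i t0)) with
      (mult_real_fct (/ avgk n p) (fun s => sumk n (fun i => phi i * p i * I i s))).
    match goal with |- derivable_pt_lim _ _ ?l => replace l with
      (/ avgk n p * sumk n (fun i => phi i * p i * (lam i * S i t * Theta n p phi I t + delta * lam i * V i t * Theta n p phi I t
         - (gamma + beta + d) * I i t))) end.
    apply derivable_pt_lim_scal; auto.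
    rewrite (sumk_ext n _ (fun i => Theta n p phi I t * (w i * (S i t + delta * V i t)) + (- c) * (phi i * p i * I i t))).
    2: { intros k Hk. unfold w, c. ring. }
    rewrite sumk_plus, !sumk_scal. unfold Fv. fold avg.
    replace (Theta n p phi I t * (/ avg * sumk n (fun k : nat => w k * (S k t + delta * V k t)) - c)) with
      (Theta n p phi I t * (/ avg * sumk n (fun k : nat => w k * (S k t + delta * V k t))) - c * Theta n p phi I t) by ring.
    unfold Theta at 3. fold avg. ring. }
  assert (HTh0 : forall t, 0 <= t -> 0 <= Th t).
  { intros t Ht. unfold Th, Theta. apply Rmult_le_pos. apply Rlt_le, Rinv_0_lt_compat; auto.
    apply sumk_nonneg. intros k Hk. destruct (Hpos k Hk t Ht) as [_ [_ [h _]]].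
    apply Rmult_le_pos; auto. apply Rlt_le, Rmult_lt_0_compat; auto. }
  assert (HFv0 : forall t, 0 <= t -> 0 <= Fv t).
  { intros t Ht. unfold Fv. apply Rmult_le_pos. apply Rlt_le, Rinv_0_lt_compat; auto.
    apply sumk_nonneg. intros k Hk. destruct (Hpos k Hk t Ht) as [h1 [h2 _]].
    apply Rmult_le_pos; auto. apply Rlt_le; auto. nra. }
  assert (LD : forall t0 t, 0 < t0 <= t -> Th t >= Th t0 * exp (- c * (t - t0))).
  { intros t0 t Ht. apply (cmp_low Th (fun u => Th u * (Fv u - c))); [lra| |].
    intros u Hu; apply HdTh; lra.
    intros u Hu. pose proof (HTh0 u ltac:(lra)). pose proof (HFv0 u ltac:(lra)). nra. }
  assert (GR : forall t0 t, 0 < t0 <= t -> (forall u, t0 <= u <= t -> Fv u >= c + alpha) ->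
                 Th t >= Th t0 * exp (alpha * (t - t0))).
  { intros t0 t Ht HF. apply (cmp_low Th (fun u => Th u * (Fv u - c))); [lra| |].
    intros u Hu; apply HdTh; lra.
    intros u Hu. pose proof (HTh0 u ltac:(lra)). pose proof (HF u Hu). nra. }
  assert (WIN : forall t0, 0 < t0 -> (forall u, t0 <= u <= t0 + L -> Th u <= eta0) -> Th (t0 + L) >= 2 * Th t0).
  { intros t0 Ht0 Hwin.
    assert (Fb : forall u, t0 + 2 * tau <= u <= t0 + L -> Fv u >= c + alpha).
    { intros u Hu.
      assert (Hkb : forall k, (1 <= k <= n)%nat ->
        S k u + delta * V k u >= N k * (omega + d + delta * mu k) / (omega + mu k + d)
            + - (rho * (eta0 / c) * (lam k * N k) + (rho + 2) * eps1 * N k)).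
      { intros k Hk. destruct (Hsol k Hk) as [_ [_ [_ [_ Hdd]]]].
        pose proof (HN k Hk) as HNk. pose proof (Hmu k Hk). pose proof (Hlam k Hk).
        set (D := omega + mu k + d).
        assert (HD : 0 < D) by (unfold D; lra).
        assert (Vb : V k u <= mu k * N k / D + N k * eps1).
        { assert (V k u <= mu k * N k / D + (V k t0 - mu k * N k / D) * exp (- D * (u - t0))).
          { apply (cmp_up (V k) (fun s => mu k * S k s - delta * lam k * V k s * Theta n p phi I s - (d + omega) * V k s));
              [lra|lra| |].
            - intros s Hs. apply (Hdd s ltac:(lra)).
            - intros s Hs. pose proof (Hsum k Hk s ltac:(lra)) as Hs1. destruct (Hpos k Hk s ltac:(lra)) as [h1 [h2 [h3 h4]]].
              pose proof (HTh0 s ltac:(lra)) as Hts. unfold Th in Hts. fold N in Hs1.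
              assert (0 <= delta * lam k * V k s * Theta n p phi I s).
              { apply Rmult_le_pos; [apply Rmult_le_pos; [apply Rmult_le_pos|]|]. all: try lra. }
              unfold D. nra. }
          eapply Rle_trans. apply H1. apply (LB1 D d tau (u - t0)); try lra. unfold D; lra.
          destruct (Hpos k Hk t0 ltac:(lra)) as [h1 [h2 [h3 h4]]]. pose proof (Hsum k Hk t0 ltac:(lra)) as Hs0. fold N in Hs0.
          assert (0 <= mu k * N k / D) by (apply Rmult_le_pos; [nra| apply Rlt_le, Rinv_0_lt_compat; lra]). lra. }
        set (B := lam k * N k * eta0 / c + N k * eps1).
        assert (Ib : forall v, t0 + tau <= v <= t0 + L -> I k v <= B).
        { intros v Hv.
          assert (I k v <= lam k * N k * eta0 / c + (I k t0 - lam k * N k * eta0 / c) * exp (- c * (v - t0))).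
          { apply (cmp_up (I k) (fun s => lam k * S k s * Theta n p phi I s + delta * lam k * V k s * Theta n p phi I s
               - (gamma + beta + d) * I k s)); [lra|lra| |].
            - intros s Hs. apply (Hdd s ltac:(lra)).
            - intros s Hs. pose proof (Hsum k Hk s ltac:(lra)) as Hs1. destruct (Hpos k Hk s ltac:(lra)) as [h1 [h2 [h3 h4]]].
              pose proof (HTh0 s ltac:(lra)) as Hs2. pose proof (Hwin s ltac:(lra)) as Hs3. unfold Th in Hs2, Hs3. fold N in Hs1.
              assert (0 <= S k s + delta * V k s <= N k) by nra.
              replace (lam k * S k s * Theta n p phi I s + delta * lam k * V k s * Theta n p phi I s)
                with (lam k * ((S k s + delta * V k s) * Theta n p phi I s)) by ring.
              assert ((S k s + delta * V k s) * Theta n p phi I s <= N k * eta0).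
              { apply Rmult_le_compat; lra. }
              assert (lam k * ((S k s + delta * V k s) * Theta n p phi I s) <= lam k * (N k * eta0))
                by (apply Rmult_le_compat_l; lra).
              unfold c.
              replace (lam k * N k * eta0) with (lam k * (N k * eta0)) by ring. lra. }
          eapply Rle_trans. apply H1. unfold B. apply (LB1 c d tau (v - t0)); try lra. unfold c; lra.
          destruct (Hpos k Hk t0 ltac:(lra)) as [h1 [h2 [h3 h4]]]. pose proof (Hsum k Hk t0 ltac:(lra)) as Hs0. fold N in Hs0.
          assert (0 <= lam k * N k * eta0 / c).
          { apply Rmult_le_pos; [| apply Rlt_le, Rinv_0_lt_compat; lra].
            apply Rmult_le_pos; [apply Rmult_le_pos|]; lra. } lra. }
        assert (HB : 0 <= B).
        { unfold B. assert (0 <= lam k * N k * eta0 / c).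
          { apply Rmult_le_pos; [| apply Rlt_le, Rinv_0_lt_compat; lra].
            apply Rmult_le_pos; [apply Rmult_le_pos|]; lra. }
          assert (0 <= N k * eps1) by (apply Rmult_le_pos; lra). lra. }
        assert (Qb : Q k u <= beta * B / r + N k * eps1).
        { assert (Q k u <= beta * B / r + (Q k (t0 + tau) - beta * B / r) * exp (- r * (u - (t0 + tau)))).
          { apply (cmp_up (Q k) (fun s => beta * I k s - (eta + d) * Q k s)); [lra|lra| |].
            - intros s Hs. apply (Hdd s ltac:(lra)).
            - intros s Hs. pose proof (Ib s ltac:(lra)). unfold r. nra. }
          eapply Rle_trans. apply H1. apply (LB1 r d tau (u - (t0 + tau))); try lra. unfold r; lra.
          destruct (Hpos k Hk (t0 + tau) ltac:(lra)) as [h1 [h2 [h3 h4]]].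
          pose proof (Hsum k Hk (t0 + tau) ltac:(lra)) as Hs0. fold N in Hs0.
          assert (0 <= beta * B / r) by (apply Rmult_le_pos; [nra| apply Rlt_le, Rinv_0_lt_compat; lra]). lra. }
        assert (Ibu : I k u <= B) by (apply Ib; lra).
        pose proof (Hsum k Hk u ltac:(lra)). fold N in H1.
        destruct (Hpos k Hk u ltac:(lra)) as [h1 [h2 [h3 h4]]].
        assert (Eq1 : N k * (omega + d + delta * mu k) / D = N k - (1 - delta) * (mu k * N k / D))
          by (unfold D; field; lra).
        fold D. rewrite Eq1.
        assert (Eq2 : rho * (eta0 / c) * (lam k * N k) + (rho + 2) * eps1 * N k = rho * B + 2 * (N k * eps1))
          by (unfold B, rho; field; lra).
        rewrite Eq2.
        assert (beta * B / r = (rho - 1) * B) by (unfold rho; field; lra).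
        assert ((1 - delta) * (V k u - mu k * N k / D) <= N k * eps1).
        { assert (0 <= N k * eps1) by (apply Rmult_le_pos; lra).
          assert (V k u - mu k * N k / D <= N k * eps1) by lra. nra. }
        nra. }
      assert (Hsl : sumk n (fun k => w k * (N k * (omega + d + delta * mu k) / (omega + mu k + d)
            + - (rho * (eta0 / c) * (lam k * N k) + (rho + 2) * eps1 * N k)))
             <= sumk n (fun k => w k * (S k u + delta * V k u))).
      { apply sumk_le. intros k Hk. specialize (Hkb k Hk). pose proof (Hw k Hk).
        apply Rmult_le_compat_l; lra. }
      rewrite (sumk_ext n _ (fun k => w k * (N k * (omega + d + delta * mu k) / (omega + mu k + d))
            + ((- (rho * (eta0 / c))) * (w k * (lam k * N k)) + (- ((rho + 2) * eps1)) * (w k * N k)))) in Hsl.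
      2: { intros; ring. }
      rewrite !sumk_plus, !sumk_scal in Hsl.
      assert (E1 : rho * (eta0 / c) * K2 = alpha / 2) by (unfold eta0; field; repeat split; lra).
      assert (E2 : (rho + 2) * eps1 * K1 = alpha / 2) by (unfold eps1; field; repeat split; lra).
      unfold Fv. unfold K1, K2 in E1, E2. unfold F0 in alpha.
      assert (Hia : 0 < / avg) by (apply Rinv_0_lt_compat; auto).
      apply Rmult_le_compat_l with (r := / avg) in Hsl; [|lra].
      unfold alpha, F0. unfold alpha, F0 in E1, E2. nra. }
    assert (A1 : Th (t0 + 2 * tau) >= Th t0 * exp (- c * (2 * tau))).
    { replace (2 * tau) with (t0 + 2 * tau - t0) at 2 by ring. apply LD; lra. }
    assert (A2 : Th (t0 + L) >= Th (t0 + 2 * tau) * exp (alpha * sL)).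
    { replace sL with (t0 + L - (t0 + 2 * tau)) by (unfold L; ring). apply GR. unfold L; lra. auto. }
    pose proof (HTh0 t0 ltac:(lra)). pose proof (exp_pos (alpha * sL)). pose proof (exp_pos (- c * (2 * tau))).
    assert (HX : Th (t0 + 2 * tau) * exp (alpha * sL) >= Th t0 * exp (- c * (2 * tau)) * exp (alpha * sL)).
    { apply Rle_ge, Rmult_le_compat_r; lra. }
    rewrite Rmult_assoc, H2 in HX. lra. }
  assert (HccTh : forall a b0, 0 <= a -> ccont Th a b0).
  { intros a b0 Ha. unfold Th, Theta. apply ccont_scal. apply ccont_sumk. intros k Hk.
    apply (ccont_scal (I k)). destruct (Hsol k Hk) as [_ [_ [r3 [_ Hdd]]]].
    apply ccont_sol; auto. intros c0 Hc0 Hc0'. destruct (Hdd c0 Hc0') as [_ [_ [dI _]]]. eexists; eauto. }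
  assert (HTh1 : 0 < Th 1).
  { destruct (classic (exists k, (1 <= k <= n)%nat /\ I k 0 > 0)) as [[k [Hk HIk]]|Hno].
    2: { exfalso. assert (Itot n p I 0 <= 0).
         { unfold Itot. assert (Z0 : forall m, sumk m (fun _ => 0) = 0).
           { induction m; simpl; auto. rewrite IHm; ring. }
           apply Rle_trans with (sumk n (fun _ => 0)); [|rewrite Z0; lra].
           apply sumk_le. intros k Hk. destruct (Rle_or_lt (I k 0) 0).
           pose proof (Hp k Hk). nra. exfalso; apply Hno; exists k; split; auto. } lra. }
    assert (HT0 : 0 < Th 0).
    { unfold Th, Theta. apply Rmult_lt_0_compat. apply Rinv_0_lt_compat; auto.
      eapply Rlt_le_trans; [|apply (sumk_term_le n (fun i => phi i * p i * I i 0) k)]; auto.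
      apply Rmult_lt_0_compat; auto. apply Rmult_lt_0_compat; auto.
      intros j Hj. destruct (Hpos j Hj 0 ltac:(lra)) as [_ [_ [h _]]].
      apply Rmult_le_pos; auto. apply Rlt_le, Rmult_lt_0_compat; auto. }
    destruct (HccTh 0 1 ltac:(lra) 0 ltac:(lra) (Th 0 / 2)) as [dl [Hdl Hd']]; [lra|].
    set (u := Rmin (dl / 2) (1 / 2)).
    assert (Hu1 : 0 < u) by (apply Rmin_glb_lt; lra).
    assert (Hu2 : u <= dl / 2) by apply Rmin_l. assert (Hu3 : u <= 1 / 2) by apply Rmin_r.
    specialize (Hd' u ltac:(lra) ltac:(rewrite Rabs_right; lra)). apply Rabs_def2 in Hd'.
    pose proof (LD u 1 ltac:(lra)). pose proof (exp_pos (- c * (1 - u))). nra. }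
  assert (Hts : exists ts, 1 <= ts /\ Th ts >= eta0).
  { destruct (classic (exists ts, 1 <= ts /\ Th ts >= eta0)) as [|Hno]; auto. exfalso.
    assert (Hall : forall t, 1 <= t -> Th t < eta0).
    { intros t Ht. destruct (Rlt_or_le (Th t) eta0); auto. exfalso; apply Hno; exists t; split; lra. }
    assert (Hj : forall j : nat, Th (1 + INR j * L) >= 2 ^ j * Th 1).
    { induction j. simpl. replace (1 + 0 * L) with 1 by ring. lra.
      assert (0 <= INR j) by apply pos_INR.
      pose proof (WIN (1 + INR j * L) ltac:(nra)) as HW.
      replace (1 + INR j * L + L) with (1 + INR (Datatypes.S j) * L) in HW by (rewrite S_INR; ring).
      assert (Th (1 + INR (Datatypes.S j) * L) >= 2 * Th (1 + INR j * L)).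
      { apply HW. intros u Hu. apply Rlt_le, Hall. nra. }
      replace (2 ^ Datatypes.S j) with (2 * 2 ^ j) by (simpl; ring). lra. }
    destruct (pow2_big (Th 1) eta0 HTh1) as [j Hj2].
    specialize (Hj j). assert (0 <= INR j) by apply pos_INR.
    pose proof (Hall (1 + INR j * L) ltac:(nra)). lra. }
  destruct Hts as [ts [Hts1 Hts2]].
  assert (Hlow : forall t, ts <= t -> Th t >= epsT).
  { intros t Ht.
    assert (HeL : exp (- c * L) <= 1).
    { rewrite <- exp_0. destruct (Req_dec (- c * L) 0). rewrite H; lra. apply Rlt_le, exp_increasing. nra. }
    destruct (Rle_or_lt eta0 (Th t)) as [Hge|Hlt].
    { unfold epsT. nra. }
    assert (Htst : ts < t). { destruct (Req_dec ts t). subst; lra. lra. }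
    destruct (last_time Th ts t eta0 Htst) as [s0 [Hs0 [Hs0e Hs0a]]]; auto.
    { apply HccTh; lra. }
    destruct (Rle_or_lt (t - s0) L) as [Hle|Hgt].
    - pose proof (LD s0 t ltac:(lra)).
      assert (exp (- c * L) <= exp (- c * (t - s0))).
      { destruct (Req_dec (- c * L) (- c * (t - s0))) as [E|E]. rewrite E; lra.
        apply Rlt_le, exp_increasing. nra. }
      unfold epsT. rewrite Hs0e in H. nra.
    - exfalso. pose proof (WIN s0 ltac:(lra)) as HW.
      assert (Th (s0 + L) >= 2 * Th s0).
      { apply HW. intros u Hu. destruct (Req_dec u s0). subst; lra. apply Rlt_le, Hs0a. lra. }
      pose proof (Hs0a (s0 + L) ltac:(lra)). lra. }
  exists ts. intros t Ht.
  assert (HIt : avg * Th t <= Phs * Itot n p I t).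
  { unfold Th, Theta. fold avg. rewrite <- Rmult_assoc, Rinv_r, Rmult_1_l by lra.
    unfold Itot, Phs. rewrite <- sumk_scal. apply sumk_le. intros k Hk.
    destruct (Hpos k Hk t ltac:(lra)) as [_ [_ [h _]]].
    assert (phi k <= sumk n phi) by (apply sumk_term_le; auto; intros; apply Rlt_le; auto).
    pose proof (Hp k Hk). assert (0 <= p k * I k t) by nra. nra. }
  pose proof (Hlow t Ht).
  assert (avg * epsT / Phs <= Itot n p I t).
  { unfold Rdiv. apply (Rmult_le_reg_r Phs); auto. rewrite Rmult_assoc, Rinv_l, Rmult_1_r by lra. nra. }
  lra.
Qed.
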